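(* Let $R\ge1$ and let $\mathbb{G}_1,\dots,\mathbb{G}_R$ be linear arrays whose difference coarrays $\mathbb{D}_{\mathbb{G}_1},\dots,\mathbb{D}_{\mathbb{G}_R}$ are all hole-free. Let $\mathbb{M}_r$ ($0\le r\le R$) be the multi-generator fractal array built from them. Then for every $1\le r\le R$ the difference coarray $\mathbb{D}_r$ of $\mathbb{M}_r$ is hole-free and $$\mathbb{D}_r=\left[-\tfrac{P_r-1}{2},\tfrac{P_r-1}{2}\right]\cap\mathbb{Z},\qquad P_r=\prod_{i=1}^r|\mathbb{D}_{\mathbb{G}_i}|.$$
   Context: A linear array is a finite set $\mathbb{G}\subset\mathbb{Z}$ with $\min\mathbb{G}=0$; its difference coarray is $\mathbb{D}=\{n_1-n_2:n_1,n_2\in\mathbb{G}\}$; its central ULA is the largest set $\{-m,\dots,m\}$ ($m\ge0$) contained in $\mathbb{D}$; $\mathbb{D}$ is hole-free if it equals its central ULA. Given generators $\mathbb{G}_1,\dots,\mathbb{G}_R$ with central ULAs $\mathbb{U}_{\mathbb{G}_i}$, the multi-generator fractal array is defined by $\mathbb{M}_0=\{0\}$ and $\mathbb{M}_{r+1}=\bigcup_{n\in\mathbb{G}_{r+1}}\big(\mathbb{M}_r+n\prod_{i=1}^{r}|\mathbb{U}_{\mathbb{G}_i}|\big)$ for $0\le r\le R-1$ (empty product $=1$), where $A+t=\{a+t:a\in A\}$. *)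

(* Defs.v *)
(* Linear arrays are finite sets of integers, represented
   as sequences (duplicates are irrelevant: only membership matters). *)
From mathcomp Require Import all_boot all_order all_algebra.
Set Implicit Arguments. Unset Strict Implicit. Unset Printing Implicit Defensive.
Import Order.TTheory GRing.Theory Num.Theory.

Definition linear_array (G : seq int) : Prop :=
  (0%R \in G) /\ all (fun x : int => (0 <= x)%R) G.

Definition diffs (G : seq int) : seq int := [seq (a - b)%R | a <- G, b <- G].

Definition dbound (G : seq int) : nat := \max_(d <- diffs G) `|d|%N.

Definition ula_ok (G : seq int) (m : nat) : bool :=
  all (fun k : nat => (Posz k \in diffs G) && ((- Posz k)%R \in diffs G)) (iota 0 m.+1).

(* radius m of the central ULA: the largest m >= 0 with {-m..m} in D
   (no m larger than dbound G can qualify) *)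
Definition ula_rad (G : seq int) : nat :=
  \max_(m < (dbound G).+1 | ula_ok G m) (m : nat).

Definition ula_size (G : seq int) : nat := (ula_rad G).*2.+1.

Definition hole_free (G : seq int) : Prop :=
  forall d : int, d \in diffs G <-> (`|d| <= ula_rad G)%N.

Definition coarray_size (G : seq int) : nat := size (undup (diffs G)).

Definition ula_prod (Gs : nat -> seq int) (r : nat) : nat :=
  \prod_(1 <= i < r.+1) ula_size (Gs i).

(* multi-generator fractal array; generators indexed 1..R *)
Fixpoint fractal (Gs : nat -> seq int) (r : nat) : seq int :=
  match r with
  | 0 => [:: 0%R]
  | r'.+1 => flatten [seq [seq (a + n * Posz (ula_prod Gs r'))%R | a <- fractal Gs r']
                     | n <- Gs r'.+1]
  end.

(* Main.v *)
Require Import Defs.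
From mathcomp Require Import all_boot all_order all_algebra.
From mathcomp Require Import zify ring.
Import Order.TTheory GRing.Theory Num.Theory.

Lemma mem_diffs (G : seq int) d :
  d \in diffs G <-> exists a b, [/\ a \in G, b \in G & d = (a - b)%R].
Proof.
split.
  by move=> /allpairsP [[a b] /= [Ha Hb ->]]; exists a, b.
by move=> [a [b [Ha Hb ->]]]; apply/allpairsP; exists (a, b).
Qed.

Lemma rad_of_char (G : seq int) (h : nat) :
  (forall d : int, d \in diffs G <-> (absz d <= h)%N) -> ula_rad G = h.
Proof.
move=> HG.
have Hdb : dbound G = h.
  apply/eqP; rewrite eqn_leq; apply/andP; split.
    rewrite /dbound; apply/bigmax_leqP_seq => d Hd _.
    by apply/HG.
  have Hh : (Posz h \in diffs G) by apply/HG.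
  exact: (@leq_bigmax_seq _ _ xpredT (fun d : int => absz d) _ Hh).
have Hok : forall m, ula_ok G m = (m <= h)%N.
  move=> m; apply/idP/idP.
    move=> /allP /(_ m); rewrite mem_iota add0n ltnSn => /(_ isT).
    by move=> /andP [/HG].
  move=> Hm; apply/allP => k; rewrite mem_iota add0n => Hk.
  apply/andP; split; apply/HG; lia.
rewrite /ula_rad Hdb.
apply/eqP; rewrite eqn_leq; apply/andP; split.
  apply/bigmax_leqP => i _; by rewrite -ltnS.
have := @leq_bigmax_cond _ (fun m : 'I_h.+1 => ula_ok G m) (fun m => nat_of_ord m) ord_max.
by rewrite /= Hok leqnn => /(_ isT).
Qed.

Lemma csize_hf (G : seq int) : hole_free G -> coarray_size G = ula_size G.
Proof.
move=> HG; set m := ula_rad G.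
have Hp : perm_eq (undup (diffs G))
   [seq (Posz i - Posz m)%R | i <- iota 0 m.*2.+1].
  apply: uniq_perm; first exact: undup_uniq.
    rewrite map_inj_uniq ?iota_uniq // => i j /= H; lia.
  move=> x; rewrite mem_undup; apply/idP/idP.
    move=> /HG Hx; apply/mapP; exists (absz (x + Posz m)%R).
      rewrite mem_iota; lia.
    lia.
  move=> /mapP [i]; rewrite mem_iota => Hi ->; apply/HG; rewrite -/m; lia.
by rewrite /coarray_size (perm_size Hp) size_map size_iota.
Qed.

Lemma odd_prod (Gs : nat -> seq int) r : odd (ula_prod Gs r).
Proof.
elim: r => [|r IH]; first by rewrite /ula_prod big_geq.
by rewrite /ula_prod big_nat_recr //= oddM IH /ula_size /= odd_double.
Qed.

Lemma decomp (d : int) (k m : nat) :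
  (absz d <= k + m * k.*2.+1)%N ->
  exists e c : int, [/\ (absz e <= m)%N, (absz c <= k)%N &
     d = (e * Posz (k.*2.+1) + c)%R].
Proof.
move=> Hd.
set P := Posz (k.*2.+1).
have HP : (0 < P)%R by [].
have HP0 : P != 0%R by [].
have Heq := divz_eq (d + Posz k) P.
have H0 := modz_ge0 (d + Posz k) HP0.
have H1 := ltz_pmod (d + Posz k) HP.
set q := ((d + Posz k) %/ P)%Z in Heq *.
set rho := ((d + Posz k) %% P)%Z in Heq H0 H1 *.
exists q, (rho - Posz k)%R; split.
- rewrite /P in Heq H1; nia.
- rewrite /P in H1; lia.
- lia.
Qed.

Lemma main (R : nat) (Gs : nat -> seq int) :
  (forall i, (1 <= i <= R)%N -> hole_free (Gs i)) ->
  forall r, (r <= R)%N -> forall d : int,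
    d \in diffs (fractal Gs r) <-> (absz d <= (ula_prod Gs r).-1./2)%N.
Proof.
move=> Hhf; elim=> [|r IH] Hr d.
  rewrite /ula_prod big_geq //= /diffs /=; rewrite inE; split.
    by move=> /eqP ->.
  by move=> H; apply/eqP; lia.
have IH' := IH (ltnW Hr).
have Hg := Hhf r.+1 (Hr).
set m := ula_rad (Gs r.+1).
set k := (ula_prod Gs r).-1./2.
have HPk : ula_prod Gs r = k.*2.+1.
  have := odd_prod Gs r; rewrite /k.
  case: (ula_prod Gs r) => [|p] //= Hodd.
  by rewrite -{1}(odd_double_half p) (negbTE Hodd) add0n.
have Hnew : (ula_prod Gs r.+1).-1./2 = k + m * k.*2.+1.
  rewrite /ula_prod big_nat_recr //= -/(ula_prod Gs r) HPk /ula_size -/m.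
  have -> : (k.*2.+1 * m.*2.+1).-1 = (k + m * k.*2.+1).*2 by rewrite -!muln2; lia.
  by rewrite doubleK.
rewrite Hnew; split.
  move=> /mem_diffs [a [b [/flatten_mapP [n1 Hn1 /mapP [a1 Ha1 ->]]
                           /flatten_mapP [n2 Hn2 /mapP [a2 Ha2 ->]] ->]]].
  have H1 : (absz (a1 - a2) <= k)%N by apply/IH'/mem_diffs; exists a1, a2.
  have H2 : (absz (n1 - n2) <= m)%N by apply/Hg/mem_diffs; exists n1, n2.
  rewrite HPk; nia.
move=> /decomp [e [c [He Hc ->]]].
move: He => /Hg /mem_diffs [n1 [n2 [Hn1 Hn2 Hne]]].
move: Hc => /IH' /mem_diffs [a1 [a2 [Ha1 Ha2 Hac]]].
apply/mem_diffs; exists (a1 + n1 * Posz (ula_prod Gs r))%R,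
  (a2 + n2 * Posz (ula_prod Gs r))%R; split.
- by apply/flatten_mapP; exists n1 => //; apply/mapP; exists a1.
- by apply/flatten_mapP; exists n2 => //; apply/mapP; exists a2.
- rewrite HPk Hne Hac; ring.
Qed.

Theorem theorem8 (R : nat) (Gs : nat -> seq int) :
  (1 <= R)%N ->
  (forall i, (1 <= i <= R)%N -> linear_array (Gs i)) ->
  (forall i, (1 <= i <= R)%N -> hole_free (Gs i)) ->
  forall r, (1 <= r <= R)%N ->
    hole_free (fractal Gs r) /\
    (forall d : int, d \in diffs (fractal Gs r) <->
       (- (((\prod_(1 <= i < r.+1) coarray_size (Gs i)) - 1)./2)%:Z <= d <=
          (((\prod_(1 <= i < r.+1) coarray_size (Gs i)) - 1)./2)%:Z)%R).
Proof.
move=> _ _ Hhf r /andP [Hr1 Hr].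
have Hm := @main R Gs Hhf r Hr.
have Hprod : \prod_(1 <= i < r.+1) coarray_size (Gs i) = ula_prod Gs r.
  apply: eq_big_nat => i Hi; apply: csize_hf; apply: Hhf; lia.
rewrite Hprod subn1.
split.
  move=> d; rewrite (@rad_of_char _ _ Hm); exact: Hm.
move=> d; split => [/Hm H|H]; [lia | apply/Hm; lia].
Qed.
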